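(* Let $\mathcal{X}$ be a Banach space and $\mathcal{U}=\mathcal{X}^*$ (duality pairing $\langle\cdot,\cdot\rangle_{\mathcal{U},\mathcal{X}}$), $\mathcal{W},\mathcal{Y}$ reflexive Banach spaces, $\mathcal{G}$ a Hilbert space, $g^\delta\in\mathcal{G}$, $\alpha>0$, $A\in L(\mathcal{Y},\mathcal{W}^* )$ continuously invertible, $B\in L(\mathcal{U},\mathcal{W}^* )$ admitting $B^*\in L(\mathcal{W},\mathcal{X})$ with $\langle Bu,w\rangle_{\mathcal{W}^*,\mathcal{W}}=\langle u,B^*w\rangle_{\mathcal{U},\mathcal{X}}$ for all $u\in\mathcal{U}$, $w\in\mathcal{W}$, and $C\in L(\mathcal{Y},\mathcal{G})$. Let $\mathcal{R}_\alpha$ be the indicator function of $B^\mathcal{U}_{1/\alpha}=\{u\in\mathcal{U}:\|u\|_\mathcal{U}\le1/\alpha\}$ and $J_\alpha(u,y)=\frac12\|Cy-g^\delta\|_\mathcal{G}^2+\mathcal{R}_\alpha(u)$. Let $\mathcal{U}_h\subset\mathcal{U}$, $\mathcal{Y}_h\subset\mathcal{Y}$, $\mathcal{W}_h\subset\mathcal{W}$ be finite-dimensional subspaces. Let $(\bar u,\bar y)$ minimize $J_\alpha$ over $\mathcal{U}\times\mathcal{Y}$ subject to $Ay=Bu$, and let $(\bar u_h,\bar y_h)$ minimize $J_\alpha$ over $\mathcal{U}_h\times\mathcal{Y}_h$ subject to $\langle Ay-Bu,w_h\rangle_{\mathcal{W}^*,\mathcal{W}}=0$ for all $w_h\in\mathcal{W}_h$,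 with $\bar w_h\in\mathcal{W}_h$ such that $$\langle C^*(C\bar y_h-g^\delta)+A^*\bar w_h,y_h\rangle_{\mathcal{Y}^*,\mathcal{Y}}=0\ \forall y_h\in\mathcal{Y}_h,\quad \bar u_h\in B^{\mathcal{U}_h}_{1/\alpha},\ \ \langle u_h-\bar u_h,B^*\bar w_h\rangle_{\mathcal{U},\mathcal{X}}\le0\ \forall u_h\in B^{\mathcal{U}_h}_{1/\alpha},$$ where $B^{\mathcal{U}_h}_{1/\alpha}=B^\mathcal{U}_{1/\alpha}\cap\mathcal{U}_h$. Let $\mathcal{J}^\mathcal{X}:\mathcal{X}\to\mathcal{U}$ be a duality mapping, i.e. $\|\mathcal{J}^\mathcal{X}(x)\|_\mathcal{U}=1$ and $\langle\mathcal{J}^\mathcal{X}(x),x\rangle_{\mathcal{U},\mathcal{X}}=\|x\|_\mathcal{X}$ for all $x\in\mathcal{X}$. Let $\hat w\in\mathcal{W}$ solve $C^*(C\bar y_h-g^\delta)+A^*\hat w=0$ and define $$\rho_y:=A\bar y_h-B\bar u_h,\qquad \rho_u:=\alpha\bar u_h-\mathcal{J}^\mathcal{X}(B^*\bar w_h),$$ $$D(B^*\hat w,B^*\bar w_h):=\langle\mathcal{J}^\mathcal{X}(B^*\hat w)-\mathcal{J}^\mathcal{X}(B^*\bar w_h),B^*(\hat w-\bar w_h)\rangle_{\mathcal{U},\mathcal{X}}.$$ Then $$\|C\bar y_h-C\bar y\|_\mathcal{G}^2\le\frac4\alpha\langle-\rho_u,B^*\hat w\rangle_{\mathcal{U},\mathcal{X}}+\frac4\alpha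 D(B^*\hat w,B^*\bar w_h)+4\|CA^{-1}\rho_y\|_\mathcal{G}^2,$$ $$J_\alpha(\bar u_h,\bar y_h)-J_\alpha(\bar u,\bar y)\le\frac1\alpha\langle-\rho_u,B^*\hat w\rangle_{\mathcal{U},\mathcal{X}}+\frac1\alpha D(B^*\hat w,B^*\bar w_h)+\|CA^{-1}\rho_y\|_\mathcal{G}\,\|C\bar y_h-g^\delta\|_\mathcal{G}.$$
   Context: $A^*\in L(\mathcal{W},\mathcal{Y}^* )$ and $C^*\in L(\mathcal{G},\mathcal{Y}^* )$ denote the adjoints defined by $\langle Ay,w\rangle_{\mathcal{W}^*,\mathcal{W}}=\langle y,A^*w\rangle_{\mathcal{Y},\mathcal{Y}^*}$ and $(Cy,g)_\mathcal{G}=\langle y,C^*g\rangle_{\mathcal{Y},\mathcal{Y}^*}$. $D$ is the symmetric Bregman distance associated with $\|\cdot\|_\mathcal{X}$. *)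

(* Defs.v *)
From HB Require Import structures.
From mathcomp Require Import all_boot all_order all_algebra.
From mathcomp Require Import all_classical all_reals all_analysis.
Set Implicit Arguments. Unset Strict Implicit. Unset Printing Implicit Defensive.
Import Order.TTheory GRing.Theory Num.Theory.
Import numFieldNormedType.Exports.
Local Open Scope classical_set_scope.
Local Open Scope ring_scope.

Section Defs.
Variable R : realType.

Definition lin_functional (V : lmodType R) (f : V -> R) : Prop :=
  forall (a : R) (x y : V), f (a *: x + y) = a * f x + f y.

Definition lin_map (V W : lmodType R) (f : V -> W) : Prop :=
  forall (a : R) (x y : V), f (a *: x + y) = a *: f x + f y.

Definition bounded_linear (V W : normedModType R) (f : V -> W) : Prop :=
  lin_map f /\ continuous f.

(* p : Vs -> V -> R realises Vs as the (topological) dual V^* of V: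
   p is bilinear, the norm of Vs is the dual norm, and every continuous
   linear functional on V is represented by a (unique) element of Vs. *)
Definition is_dual_pairing (V Vs : normedModType R) (p : Vs -> V -> R) : Prop :=
  [/\ (forall f, lin_functional (p f)),
      (forall x, lin_functional (fun f => p f x)),
      (forall f x, `|p f x| <= `|f| * `|x|),
      (forall f (eps : R), 0 < eps ->
          exists x, `|x| <= 1 /\ `|f| - eps < p f x) &
      (forall phi : V -> R, lin_functional phi -> continuous phi ->
          exists f, forall x, phi x = p f x)].

Definition reflexive_wrt (V Vs : normedModType R) (p : Vs -> V -> R) : Prop :=
  is_dual_pairing p /\
  (forall phi : Vs -> R, lin_functional phi -> continuous phi ->
      exists x, forall f, phi f = p f x).

Definition is_inner_product (G : normedModType R) (ip : G -> G -> R) : Prop :=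
  [/\ (forall x y, ip x y = ip y x),
      (forall y, lin_functional (ip ^~ y)) &
      (forall x, ip x x = `|x| ^+ 2)].

Definition findim_subspace (V : lmodType R) (S : set V) : Prop :=
  exists (n : nat) (e : 'I_n -> V),
    S = [set x | exists c : 'I_n -> R, x = \sum_(i < n) c i *: e i].

Definition zball (V : normedModType R) (r : R) : set V := [set u | `|u| <= r].

Definition Ralpha (V : normedModType R) (alpha : R) (u : V) : \bar R :=
  if `|u| <= alpha^-1 then 0%E else +oo%E.

Definition Jalpha (U Y G : normedModType R) (C : Y -> G) (g : G) (alpha : R)
  (u : U) (y : Y) : \bar R :=
  ((2^-1 * `|C y - g| ^+ 2)%:E + Ralpha alpha u)%E.

End Defs.

(* Main.v *)
Require Import Defs.
From HB Require Import structures.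
From mathcomp Require Import all_boot all_order all_algebra.
From mathcomp Require Import all_classical all_reals all_analysis.
Import Order.TTheory GRing.Theory Num.Theory.
Import numFieldNormedType.Exports.
Local Open Scope classical_set_scope.
Local Open Scope ring_scope.


From mathcomp Require Import ring lra.

Set Implicit Arguments.
Section Helpers.
Variable R : realType.

Lemma lfD (V : lmodType R) (f : V -> R) : lin_functional f ->
  forall x y, f (x + y) = f x + f y.
Proof. by move=> h x y; rewrite -[x in LHS]scale1r h mul1r. Qed.

Lemma lf0 (V : lmodType R) (f : V -> R) : lin_functional f -> f 0 = 0.
Proof.
move=> h; have := h 1 0 0; rewrite scale1r addr0 mul1r => H.
by apply: (addrI (f 0)); rewrite addr0 -H.
Qed.

Lemma lfZ (V : lmodType R) (f : V -> R) : lin_functional f ->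
  forall a x, f (a *: x) = a * f x.
Proof. by move=> h a x; rewrite -[a *: x]addr0 h (lf0 h) addr0. Qed.

Lemma lfN (V : lmodType R) (f : V -> R) : lin_functional f ->
  forall x, f (- x) = - f x.
Proof. by move=> h x; rewrite -scaleN1r (lfZ h) mulN1r. Qed.

Lemma lfB (V : lmodType R) (f : V -> R) : lin_functional f ->
  forall x y, f (x - y) = f x - f y.
Proof. by move=> h x y; rewrite (lfD h) (lfN h). Qed.

Lemma lmD (V W : lmodType R) (f : V -> W) : lin_map f ->
  forall x y, f (x + y) = f x + f y.
Proof. by move=> h x y; rewrite -[x in LHS]scale1r h scale1r. Qed.

Lemma lm0 (V W : lmodType R) (f : V -> W) : lin_map f -> f 0 = 0.
Proof.
move=> h; have := h 1 0 0; rewrite scale1r addr0 scale1r => H.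
by apply: (addrI (f 0)); rewrite addr0 -H.
Qed.

Lemma lmZ (V W : lmodType R) (f : V -> W) : lin_map f ->
  forall a x, f (a *: x) = a *: f x.
Proof. by move=> h a x; rewrite -[a *: x]addr0 h (lm0 h) addr0. Qed.

Lemma lmN (V W : lmodType R) (f : V -> W) : lin_map f ->
  forall x, f (- x) = - f x.
Proof. by move=> h x; rewrite -scaleN1r (lmZ h) scaleN1r. Qed.

Lemma lmB (V W : lmodType R) (f : V -> W) : lin_map f ->
  forall x y, f (x - y) = f x - f y.
Proof. by move=> h x y; rewrite (lmD h) (lmN h). Qed.

Lemma sq_pos_lemma (a b : R) : 0 <= b ->
  (forall t, 0 < t -> t <= 1 -> 0 <= t * a + t ^+ 2 * b) -> 0 <= a.
Proof.
move=> hb H; rewrite leNgt; apply/negP => ha.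
have hd : 0 < b - a + 1 by lra.
pose t := - a / (b - a + 1).
have ht : t * (b - a + 1) = - a by rewrite /t mulfVK // gt_eqF.
have t0 : 0 < t by rewrite /t divr_gt0 // oppr_gt0.
have t1 : t <= 1 by rewrite /t ler_pdivrMr // mul1r; lra.
have := H t t0 t1; nra.
Qed.

Section IP.
Variables (G : normedModType R) (ip : G -> G -> R).
Hypothesis hG : is_inner_product ip.

Lemma ipBl x y z : ip (x - y) z = ip x z - ip y z.
Proof. by case: hG => _ h _; rewrite (lfB (h z)). Qed.
Lemma ipBr x y z : ip z (x - y) = ip z x - ip z y.
Proof. by case: hG => hs h _; rewrite !(hs z) (lfB (h z)). Qed.
Lemma ipDl x y z : ip (x + y) z = ip x z + ip y z.
Proof. by case: hG => _ h _; rewrite (lfD (h z)). Qed.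
Lemma ipDr x y z : ip z (x + y) = ip z x + ip z y.
Proof. by case: hG => hs h _; rewrite !(hs z) (lfD (h z)). Qed.
Lemma ipZl a x z : ip (a *: x) z = a * ip x z.
Proof. by case: hG => _ h _; rewrite (lfZ (h z)). Qed.
Lemma ipZr a x z : ip z (a *: x) = a * ip z x.
Proof. by case: hG => hs h _; rewrite !(hs z) (lfZ (h z)). Qed.
Lemma ipNl x z : ip (- x) z = - ip x z.
Proof. by case: hG => _ h _; rewrite (lfN (h z)). Qed.
Lemma ipn x : ip x x = `|x| ^+ 2.
Proof. by case: hG. Qed.
Lemma ipsym x y : ip x y = ip y x.
Proof. by case: hG. Qed.

Lemma ipCS x y : ip x y <= `|x| * `|y|.
Proof.
have h1 : `|x + y| ^+ 2 = `|x| ^+ 2 + 2 * ip x y + `|y| ^+ 2.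
  rewrite -!ipn ipDl !ipDr (ipsym y x); ring.
have h2 := ler_normD x y.
have h3 : `|x + y| ^+ 2 <= (`|x| + `|y|) ^+ 2.
  by rewrite lerXn2r // ?nnegrE ?addr_ge0.
nra.
Qed.
Lemma ipn2 x y : `|x - y| ^+ 2 = ip x x - 2 * ip x y + ip y y.
Proof. rewrite -ipn ipBl !ipBr (ipsym y x); ring. Qed.
End IP.
End Helpers.

Theorem proposition4p2 (R : realType)
  (X U W Ws Y Ys G : completeNormedModType R)
  (pX : U -> X -> R) (pW : Ws -> W -> R) (pY : Ys -> Y -> R) (ip : G -> G -> R)
  (hX : is_dual_pairing pX) (hW : reflexive_wrt pW) (hY : reflexive_wrt pY)
  (hG : is_inner_product ip)
  (gd : G) (alpha : R) (halpha : 0 < alpha)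
  (A : Y -> Ws) (Ainv : Ws -> Y) (B : U -> Ws) (C : Y -> G)
  (Astar : W -> Ys) (Bstar : W -> X) (Cstar : G -> Ys)
  (hA : bounded_linear A) (hAinv : bounded_linear Ainv)
  (hAinvl : forall y, Ainv (A y) = y) (hAinvr : forall z, A (Ainv z) = z)
  (hB : bounded_linear B) (hC : bounded_linear C)
  (hBstar : bounded_linear Bstar)
  (hAadj : forall y w, pW (A y) w = pY (Astar w) y)
  (hBadj : forall u w, pW (B u) w = pX u (Bstar w))
  (hCadj : forall y g, ip (C y) g = pY (Cstar g) y)
  (Uh : set U) (Yh : set Y) (Wh : set W)
  (hUh : findim_subspace Uh) (hYh : findim_subspace Yh) (hWh : findim_subspace Wh)
  (ub : U) (yb : Y)
  (hcont_feas : A yb = B ub)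
  (hcont_min : forall u y, A y = B u ->
     (Jalpha C gd alpha ub yb <= Jalpha C gd alpha u y)%E)
  (ubh : U) (ybh : Y) (wbh : W)
  (hubh : Uh ubh) (hybh : Yh ybh) (hwbh : Wh wbh)
  (hdisc_feas : forall wh, Wh wh -> pW (A ybh - B ubh) wh = 0)
  (hdisc_min : forall u y, Uh u -> Yh y ->
     (forall wh, Wh wh -> pW (A y - B u) wh = 0) ->
     (Jalpha C gd alpha ubh ybh <= Jalpha C gd alpha u y)%E)
  (hadj_disc : forall yh, Yh yh ->
     pY (Cstar (C ybh - gd) + Astar wbh) yh = 0)
  (hball : (zball (V:=U) alpha^-1 `&` Uh) ubh)
  (hvar : forall uh, (zball (V:=U) alpha^-1 `&` Uh) uh ->
     pX (uh - ubh) (Bstar wbh) <= 0)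
  (JX : X -> U)
  (hJX : forall x, `|JX x| = 1 /\ pX (JX x) x = `|x|)
  (wh : W) (hwh : Cstar (C ybh - gd) + Astar wh = 0) :
  let rho_y := A ybh - B ubh in
  let rho_u := alpha *: ubh - JX (Bstar wbh) in
  let D := pX (JX (Bstar wh) - JX (Bstar wbh)) (Bstar (wh - wbh)) in
  `|C ybh - C yb| ^+ 2 <=
     4 / alpha * pX (- rho_u) (Bstar wh) + 4 / alpha * D
     + 4 * `|C (Ainv rho_y)| ^+ 2
  /\
  (Jalpha C gd alpha ubh ybh - Jalpha C gd alpha ub yb <=
     (alpha^-1 * pX (- rho_u) (Bstar wh) + alpha^-1 * D
      + `|C (Ainv rho_y)| * `|C ybh - gd|)%:E)%E.

Proof.
move=> rho_y rho_u D.
case: hX => hX1 hX2 hX3 _ _.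
case: hW => [[hW1 hW2 _ _ _] _].
case: hY => [[hY1 hY2 _ _ _] _].
have lA := hA.1; have lAi := hAinv.1; have lB := hB.1; have lC := hC.1.
have lBs := hBstar.1.
pose yt := Ainv (B ubh).
have Ayt : A yt = B ubh by rewrite hAinvr.
pose a := C ybh - gd; pose b := C yb - gd; pose c := C yt - gd.
have ubhball : `|ubh| <= alpha^-1 by case: hball.
have ubball : `|ub| <= alpha^-1.
  have := hcont_min _ _ Ayt; rewrite /Jalpha /Ralpha ubhball.
  by case: ifP => // _; rewrite addey // adde0 leye_eq.
have Fr : C (Ainv rho_y) = a - c.
  by rewrite /rho_y (lmB lAi) hAinvl (lmB lC) /a /c opprB addrA subrK.
have Fe : C ybh - C yb = a - b.
  by rewrite /a /b opprB addrA subrK.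
have Fcb : C yb - C yt = b - c.
  by rewrite /b /c opprB addrA subrK.
have Claim2 : pX (ub - ubh) (Bstar wh) = ip c a - ip b a.
  have hAs : Astar wh = - Cstar a by apply/eqP; rewrite -addr_eq0 addrC hwh.
  rewrite -hBadj (lmB lB) -hcont_feas -Ayt -(lmB lA) hAadj hAs (lfN (hY2 _)).
  by rewrite -hCadj (lmB lC) Fcb (ipBl hG) opprB.
have ai0 : 0 < alpha^-1 by rewrite invr_gt0.
have Q : ip c a - ip b a <= alpha^-1 * pX (- rho_u) (Bstar wh) + alpha^-1 * D.
  rewrite -Claim2.
  have eP : pX (- rho_u) (Bstar wh) = pX (JX (Bstar wbh)) (Bstar wh) - alpha * pX ubh (Bstar wh).
    by rewrite /rho_u opprB (lfB (hX2 _)) (lfZ (hX2 _)).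
  have eD : D = `|Bstar wh| - pX (JX (Bstar wh)) (Bstar wbh) - pX (JX (Bstar wbh)) (Bstar wh) + `|Bstar wbh|.
    rewrite /D (lmB lBs) (lfB (hX2 _)) !(lfB (hX1 _)) (hJX (Bstar wh)).2 (hJX (Bstar wbh)).2.
    ring.
  have e1 : pX (ub - ubh) (Bstar wh) = pX ub (Bstar wh) - pX ubh (Bstar wh) by rewrite (lfB (hX2 _)).
  have c1 : pX ub (Bstar wh) <= alpha^-1 * `|Bstar wh|.
    exact: le_trans (ler_norm _) (le_trans (hX3 _ _) (ler_wpM2r (normr_ge0 _) ubball)).
  have c2 : pX (JX (Bstar wh)) (Bstar wbh) <= `|Bstar wbh|.
    by have := le_trans (ler_norm _) (hX3 (JX (Bstar wh)) (Bstar wbh)); rewrite (hJX _).1 mul1r.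
  have ai : alpha^-1 * alpha = 1 by rewrite mulVf // gt_eqF.
  rewrite e1 eP eD.
  have : 0 <= alpha^-1 * (`|Bstar wbh| - pX (JX (Bstar wh)) (Bstar wbh)).
    by apply: mulr_ge0; [exact: ltW | lra].
  have hU : alpha^-1 * (alpha * pX ubh (Bstar wh)) = pX ubh (Bstar wh) by rewrite mulrA ai mul1r.
  move=> hh; nra.
have Fcb' : C yt - C yb = c - b.
  by rewrite /b /c opprB addrA subrK.
have Cyt_eq : forall t : R, C (yb + t *: (yt - yb)) - gd = b + t *: (c - b).
  by move=> t; rewrite (lmD lC) (lmZ lC) (lmB lC) Fcb' addrAC.
have ea : C ybh - gd = a by [].
have eb : C yb - gd = b by [].
clearbody a b c.
have FO : 0 <= ip b c - ip b b.
  apply: (@sq_pos_lemma _ _ (2^-1 * `|c - b| ^+ 2)).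
    by apply: mulr_ge0; [rewrite invr_ge0 | exact: sqr_ge0].
  move=> t t0 t1.
  pose ut := ub + t *: (ubh - ub); pose ytt := yb + t *: (yt - yb).
  have hAt : A ytt = B ut.
    by rewrite /ytt /ut (lmD lA) (lmZ lA) (lmB lA) hcont_feas Ayt (lmD lB) (lmZ lB) (lmB lB).
  have hut : `|ut| <= alpha^-1.
    have -> : ut = (1 - t) *: ub + t *: ubh.
      by rewrite /ut scalerBr scalerBl scale1r [RHS]addrAC addrA.
    apply: le_trans (ler_normD _ _) _.
    rewrite !normrZ (ger0_norm (ltW t0)) ger0_norm; last by lra.
    nra.
  have := hcont_min _ _ hAt; rewrite /Jalpha /Ralpha ubball hut !adde0 lee_fin.
  rewrite Cyt_eq eb.
  rewrite -!(ipn hG) !(ipBl hG) !(ipBr hG) !(ipDl hG) !(ipDr hG) !(ipZl hG) !(ipZr hG) !(ipBl hG) !(ipBr hG).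
  rewrite ?(ipsym hG c b).
  move=> H; nra.
split.
  rewrite Fe Fr.
  have CS1 := ipCS hG (b - c) (a - c).
  rewrite (distrC b c) in CS1.
  have N4 : 0 <= `|(a - c) - (c - b)| ^+ 2 by exact: sqr_ge0.
  rewrite (ipn2 hG) !(ipn hG) !(ipBl hG) !(ipBr hG) in N4.
  rewrite !(ipBl hG) !(ipBr hG) in CS1.
  rewrite !(ipn2 hG).
  have := sqr_ge0 (`|c - b| - `|a - c|).
  have Es := ipn2 hG c b.
  have Et := ipn2 hG a c.
  rewrite ?(ipsym hG c b) ?(ipsym hG b a) ?(ipsym hG c a) in CS1 N4 Es Q *.
  move=> hst; nra.
rewrite /Jalpha /Ralpha ubhball ubball !adde0 -EFinB lee_fin Fr.
have CS2 := ipCS hG (a - c) a.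
rewrite !(ipBl hG) in CS2.
have N5 : 0 <= `|a - b| ^+ 2 by exact: sqr_ge0.
rewrite (ipn2 hG) in N5.
rewrite ea eb -!(ipn hG).
rewrite ?(ipsym hG c b) ?(ipsym hG b a) ?(ipsym hG c a) in CS2 N5 Q *.
nra.
Qed.
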